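(* Consider two hypotheses $\mathrm{H}_0,\mathrm{H}_1$ with prior probabilities $P(\mathrm{H}_0),P(\mathrm{H}_1)$, where under $\mathrm{H}_i$ the parameter is restricted to a grid $\theta_i^{[1]},\dots,\theta_i^{[N_i]}$ with spacing $\Delta\theta_i$ and prior weights $p(\theta_i^{[n]}\mid\mathrm{H}_i)\Delta\theta_i$, and for each grid point the conditional density of $\mathbf{X}$ lies in a convex uncertainty set $\mathcal{P}_{i,\theta_i^{[n]}}$; let $\mathbb{P}_i=\prod_{n=1}^{N_i}\mathcal{P}_{i,\theta_i^{[n]}}$. For given $\lambda_i,\mu_i\ge0$, $i\in\{0,1\}$, the least favorable distributions maximizing the cost $J^{\mathrm{NP}}_{\mathrm u}=\sum_{i=0}^1P(\mathrm{H}_i)\bigl(\lambda_i\alpha_i(\pi,\boldsymbol p^{\mathrm D}_i)+\mu_i\beta_i(\pi,\boldsymbol p^{\mathrm E}_i)\bigr)$ (over four vectors of distributions $\boldsymbol P^{\mathrm D}_0,\boldsymbol P^{\mathrm E}_0\in\mathbb{P}_0$, $\boldsymbol P^{\mathrm D}_1,\boldsymbol P^{\mathrm E}_1\in\mathbb{P}_1$) are given by $$\boldsymbol Q=(\boldsymbol Q^{\mathrm D}_0,\boldsymbol Q^{\mathrm D}_1,\boldsymbol Q^{\mathrm E}_0,\boldsymbol Q^{\mathrm E}_1)=\operatorname*{arg\,max}_{\boldsymbol P^{\mathrm D}_0,\boldsymbol P^{\mathrm E}_0\in\mathbb{P}_0,\ \boldsymbol P^{\mathrm D}_1,\boldsymbol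 P^{\mathrm E}_1\in\mathbb{P}_1}D_{\rho^{\mathrm{NP}}}(\boldsymbol P^{\mathrm D}_0,\boldsymbol P^{\mathrm D}_1,\boldsymbol P^{\mathrm E}_0,\boldsymbol P^{\mathrm E}_1),$$ where $D_{\rho^{\mathrm{NP}}}(\boldsymbol P^{\mathrm D}_0,\boldsymbol P^{\mathrm D}_1,\boldsymbol P^{\mathrm E}_0,\boldsymbol P^{\mathrm E}_1)=\int\rho^{\mathrm{NP}}(\boldsymbol p^{\mathrm D}_0(\mathbf{x}),\boldsymbol p^{\mathrm D}_1(\mathbf{x}),\boldsymbol p^{\mathrm E}_0(\mathbf{x}),\boldsymbol p^{\mathrm E}_1(\mathbf{x}))\,\mathrm{d}\mathbf{x}$ is the $f$-similarity induced by $\rho^{\mathrm{NP}}=\min\{\tilde D_0^{\mathrm{NP}},\tilde D_1^{\mathrm{NP}}\}$ with $$\tilde D_i^{\mathrm{NP}}(\boldsymbol s^{\mathrm D}_0,\boldsymbol s^{\mathrm D}_1,\boldsymbol s^{\mathrm E}_0,\boldsymbol s^{\mathrm E}_1)=\mu_iP(\mathrm{H}_i)\boldsymbol a_i^\top\boldsymbol s^{\mathrm E}_i-\mu_iP(\mathrm{H}_i)\frac{(\boldsymbol b_i^\top\boldsymbol s^{\mathrm E}_i)^2}{\boldsymbol c_i^\top\boldsymbol s^{\mathrm E}_i}+\lambda_{1-i}P(\mathrm{H}_{1-i})\boldsymbol c_{1-i}^\top\boldsymbol s^{\mathrm D}_{1-i},$$ $[\boldsymbol a_i]_n=(\theta_i^{[n]})^2p(\theta_i^{[n]}\mid\mathrm{H}_i)\Delta\theta_i$,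 $[\boldsymbol b_i]_n=\theta_i^{[n]}p(\theta_i^{[n]}\mid\mathrm{H}_i)\Delta\theta_i$, $[\boldsymbol c_i]_n=p(\theta_i^{[n]}\mid\mathrm{H}_i)\Delta\theta_i$.
   Context: A policy $\pi=(\delta,\hat\theta_0,\hat\theta_1)$ consists of a randomized decision rule $\delta$ with values in $[0,1]$ (probability of accepting $\mathrm{H}_1$) and estimators $\hat\theta_i$. Here $\boldsymbol p^{\mathrm D}_i=(p^{\mathrm D}_{i,\theta_i^{[1]}},\dots,p^{\mathrm D}_{i,\theta_i^{[N_i]}})$ and similarly $\boldsymbol p^{\mathrm E}_i$ are vectors of conditional densities with distributions $\boldsymbol P^{\mathrm D}_i,\boldsymbol P^{\mathrm E}_i$. With parameter integrals replaced by grid sums: $\alpha_0=\mathbb{E}[\delta\mid\mathrm{H}_0]$, $\alpha_1=\mathbb{E}[1-\delta\mid\mathrm{H}_1]$ computed with $\boldsymbol p^{\mathrm D}_i$; $\beta_0=\mathbb{E}[(1-\delta)(\hat\theta_0-\Theta_0)^2\mid\mathrm{H}_0]$, $\beta_1=\mathbb{E}[\delta(\hat\theta_1-\Theta_1)^2\mid\mathrm{H}_1]$ computed with $\boldsymbol p^{\mathrm E}_i$. ''Least favorable'' means maximizing the cost attained by the cost-minimizing policy, i.e. maximizing $\min_\pi J^{\mathrm{NP}}_{\mathrm u}$. For a continuous, concave, positively homogeneous function $f$ on $\mathbb{R}^N_{\ge0}$ and distributions with densities $p_1,\dots,p_N$, the $f$-similarity is $D_f=\int f(p_1(\mathbf{x}),\dots,p_N(\mathbf{x}))\,\mathrm{d}\mathbf{x}$.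 *)

(* Defs.v *)
From HB Require Import structures.
From mathcomp Require Import all_boot all_order all_algebra.
From mathcomp Require Import all_classical all_reals all_analysis.
Unset Printing Implicit Defensive.
Import Order.TTheory GRing.Theory Num.Theory.
Local Open Scope ring_scope.
Local Open Scope classical_set_scope.

(* Hypothesis index i : bool, with false = H_0 and true = H_1;
   "1 - i" is ~~ i.  Grid points under H_i are indexed by 'I_(N i). *)

Section Defs.
Context {d : measure_display} {T : measurableType d} {R : realType}.
Variable mu : {measure set T -> \bar R}.   (* reference measure "dx" *)

Definition is_density (f : T -> R) : Prop :=
  measurable_fun setT f /\ (forall x, 0 <= f x) /\ (\int[mu]_x (f x)%:E = 1)%E.

Definition convex_dens_set (A : set (T -> R)) : Prop :=
  forall (f g : T -> R) (t : R), A f -> A g -> 0 <= t <= 1 ->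
    A (fun x => t * f x + (1 - t) * g x).

Variables (N : bool -> nat) (th pr : forall i : bool, 'I_(N i) -> R)
          (dth : bool -> R).

Definition cvec (i : bool) (n : 'I_(N i)) : R := pr i n * dth i.
Definition bvec (i : bool) (n : 'I_(N i)) : R := th i n * pr i n * dth i.
Definition avec (i : bool) (n : 'I_(N i)) : R := th i n ^+ 2 * pr i n * dth i.

Definition dotv (i : bool) (w s : 'I_(N i) -> R) : R := \sum_(n < N i) w n * s n.

Definition dvecs := forall i : bool, 'I_(N i) -> T -> R.

Definition in_PP (U : forall i : bool, 'I_(N i) -> set (T -> R)) (pD pE : dvecs) : Prop :=
  forall (i : bool) (n : 'I_(N i)), U i n (pD i n) /\ U i n (pE i n).

Variables (Pr lam muc : bool -> R).

Definition Dtilde (pD pE : dvecs) (i : bool) (x : T) : R :=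
  muc i * Pr i * dotv i (avec i) (fun n => pE i n x)
  - muc i * Pr i * ((dotv i (bvec i) (fun n => pE i n x)) ^+ 2
                    / dotv i (cvec i) (fun n => pE i n x))
  + lam (~~ i) * Pr (~~ i) * dotv (~~ i) (cvec (~~ i)) (fun n => pD (~~ i) n x).

Definition rhoNP (pD pE : dvecs) (x : T) : R :=
  Num.min (Dtilde pD pE false x) (Dtilde pD pE true x).

Definition DrhoNP (pD pE : dvecs) : \bar R := (\int[mu]_x (rhoNP pD pE x)%:E)%E.

(* policy pi = (delta, est false, est true) *)
Definition admissible_policy (delta : T -> R) (est : bool -> T -> R) : Prop :=
  measurable_fun setT delta /\ (forall x, 0 <= delta x <= 1) /\
  (forall i, measurable_fun setT (est i)).

(* probability of wrongly rejecting H_i: delta under H_0, 1 - delta under H_1 *)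
Definition wrong_dec (delta : T -> R) (i : bool) (x : T) : R :=
  if i then 1 - delta x else delta x.
Definition right_dec (delta : T -> R) (i : bool) (x : T) : R :=
  if i then delta x else 1 - delta x.

Definition alphaNP (delta : T -> R) (pD : dvecs) (i : bool) : \bar R :=
  (\sum_(n < N i) (cvec i n)%:E * \int[mu]_x (wrong_dec delta i x * pD i n x)%:E)%E.

Definition betaNP (delta : T -> R) (est : bool -> T -> R) (pE : dvecs) (i : bool)
  : \bar R :=
  (\sum_(n < N i) (cvec i n)%:E *
     \int[mu]_x (right_dec delta i x * (est i x - th i n) ^+ 2 * pE i n x)%:E)%E.

Definition JNP (delta : T -> R) (est : bool -> T -> R) (pD pE : dvecs) : \bar R :=
  (\sum_(i : bool) (Pr i)%:E *
     ((lam i)%:E * alphaNP delta pD i + (muc i)%:E * betaNP delta est pE i))%E.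

Definition minJNP (pD pE : dvecs) : \bar R :=
  ereal_inf [set y | exists delta est,
               admissible_policy delta est /\ y = JNP delta est pD pE].

Definition is_argmax (U : forall i : bool, 'I_(N i) -> set (T -> R))
  (F : dvecs -> dvecs -> \bar R) (qD qE : dvecs) : Prop :=
  in_PP U qD qE /\
  forall pD pE : dvecs, in_PP U pD pE -> (F pD pE <= F qD qE)%E.

End Defs.

(* Main.v *)
Require Import Defs.
From HB Require Import structures.
From mathcomp Require Import all_boot all_order all_algebra.
From mathcomp Require Import all_classical all_reals all_analysis.
From mathcomp Require Import ring lra measurable_realfun.
Import Order.TTheory GRing.Theory Num.Theory.
Local Open Scope ring_scope.
Local Open Scope classical_set_scope.

Section Alg.
Variables (R : realType) (N : bool -> nat) (th pr : forall i : bool, 'I_(N i) -> R)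
  (dth : bool -> R).
Hypothesis hdth : forall i, 0 < dth i.
Hypothesis hpr : forall i n, 0 <= pr i n.

Definition Qf i (s : 'I_(N i) -> R) (e : R) :=
  \sum_(n < N i) cvec N pr dth i n * ((e - th i n) ^+ 2 * s n).

Lemma QfE i s e : Qf i s e =
  e ^+ 2 * dotv N i (cvec N pr dth i) s - 2 * e * dotv N i (bvec N th pr dth i) s
  + dotv N i (avec N th pr dth i) s.
Proof.
rewrite /Qf /dotv !mulr_sumr -sumrB -big_split /=.
by apply: eq_bigr => n _; rewrite /cvec /bvec /avec; ring.
Qed.

Lemma cvec_ge0 i n : 0 <= cvec N pr dth i n.
Proof. by rewrite /cvec mulr_ge0 // ltW. Qed.

Lemma Qf_ge0 i s e : (forall n, 0 <= s n) -> 0 <= Qf i s e.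
Proof.
move=> s0; apply: sumr_ge0 => n _; apply: mulr_ge0; first exact: cvec_ge0.
by apply: mulr_ge0 => //; exact: sqr_ge0.
Qed.

Lemma Qf_min i s e : (forall n, 0 <= s n) ->
  dotv N i (avec N th pr dth i) s
  - dotv N i (bvec N th pr dth i) s ^+ 2 / dotv N i (cvec N pr dth i) s <= Qf i s e.
Proof.
move=> s0; rewrite QfE.
set A := dotv N i (avec N th pr dth i) s; set B := dotv N i (bvec N th pr dth i) s.
set C := dotv N i (cvec N pr dth i) s.
have C0 : 0 <= C.
  by apply: sumr_ge0 => n _; apply: mulr_ge0 => //; exact: cvec_ge0.
have [C00|Cn0] := eqVneq C 0.
  have B0 : B = 0.
    have h := psumr_eq0P (P := xpredT) (F := fun n => cvec N pr dth i n * s n).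
    rewrite /B /dotv big1 // => n _.
    have -> : bvec N th pr dth i n * s n = th i n * (cvec N pr dth i n * s n).
      by rewrite /bvec /cvec; ring.
    rewrite h ?mulr0 // => k _; apply: mulr_ge0 => //; exact: cvec_ge0.
  rewrite C00 B0 invr0 !mulr0 subr0; lra.
have Cp : 0 < C by rewrite lt_def Cn0.
rewrite -subr_ge0.
have -> : e ^+ 2 * C - 2 * e * B + A - (A - B ^+ 2 / C) = (e * C - B) ^+ 2 / C.
  by field.
by apply: divr_ge0 => //; exact: sqr_ge0.
Qed.

Lemma Qf_opt i s :
  Qf i s (dotv N i (bvec N th pr dth i) s / dotv N i (cvec N pr dth i) s) =
  dotv N i (avec N th pr dth i) s
  - dotv N i (bvec N th pr dth i) s ^+ 2 / dotv N i (cvec N pr dth i) s.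
Proof.
rewrite QfE.
set A := dotv N i (avec N th pr dth i) s; set B := dotv N i (bvec N th pr dth i) s.
set C := dotv N i (cvec N pr dth i) s.
have [->|Cn0] := eqVneq C 0.
  rewrite invr0 !mulr0; lra.
by field.
Qed.

End Alg.

Section Meas.
Context {d : measure_display} {T : measurableType d} {R : realType}.
Variable mu : {measure set T -> \bar R}.

Lemma intZ (k : R) (f : T -> R) : 0 <= k -> (forall x, 0 <= f x) ->
  measurable_fun setT f ->
  (\int[mu]_x (k * f x)%:E = k%:E * \int[mu]_x (f x)%:E)%E.
Proof.
move=> k0 f0 mf; under eq_integral do rewrite EFinM.
apply: ge0_integralZl_EFin => //.
- by move=> x _; rewrite lee_fin.
- exact/measurable_EFinP.
Qed.

Lemma intD (f g : T -> R) : (forall x, 0 <= f x) -> (forall x, 0 <= g x) ->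
  measurable_fun setT f -> measurable_fun setT g ->
  (\int[mu]_x (f x + g x)%:E = \int[mu]_x (f x)%:E + \int[mu]_x (g x)%:E)%E.
Proof.
move=> f0 g0 mf mg; under eq_integral do rewrite EFinD.
apply: ge0_integralD => //.
- by move=> x _; rewrite lee_fin.
- exact/measurable_EFinP.
- by move=> x _; rewrite lee_fin.
- exact/measurable_EFinP.
Qed.

Lemma intS (I : Type) (s : seq I) (F : I -> T -> R) :
  (forall i x, 0 <= F i x) -> (forall i, measurable_fun setT (F i)) ->
  (\int[mu]_x (\sum_(i <- s) F i x)%:E = \sum_(i <- s) \int[mu]_x (F i x)%:E)%E.
Proof.
move=> F0 mF; under eq_integral do rewrite -sumEFin.
apply: ge0_integral_sum => //.
- by move=> i; exact/measurable_EFinP.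
- by move=> i x _; rewrite lee_fin.
Qed.

Lemma minv : measurable_fun setT (fun x : R => x^-1).
Proof.
have -> : (fun x : R => x^-1) = (fun x => if x == 0 then 0 else x^-1).
  by apply/funext => x; case: eqP => // ->; rewrite invr0.
apply: measurable_fun_if => //.
- exact: (measurable_fun_eqr (f := id) (g := cst 0)).
- have -> : [set: R] `&` (fun x => x == 0) @^-1` [set false] = ~` [set (0:R)].
    by apply/seteqP; split => x /=; [move=> [_]; move/eqP|move/eqP => /negbTE].
  apply: open_continuous_measurable_fun.
    exact/closed_openC/accessible_closed_set1/hausdorff_accessible/Rhausdorff.
  move=> x; rewrite inE /= => /eqP x0.
  exact: inv_continuous.
Qed.


Variables (N : bool -> nat) (th pr : forall i : bool, 'I_(N i) -> R) (dth : bool -> R)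
  (Pr lam muc : bool -> R).
Hypotheses (hPr : forall i, 0 <= Pr i) (hlam : forall i, 0 <= lam i)
  (hmuc : forall i, 0 <= muc i) (hdth : forall i, 0 < dth i)
  (hpr : forall i n, 0 <= pr i n).
Variables (pD pE : @dvecs d T R N).
Hypotheses (mD : forall i n, measurable_fun setT (pD i n))
  (mE : forall i n, measurable_fun setT (pE i n))
  (D0 : forall i n x, 0 <= pD i n x) (E0 : forall i n x, 0 <= pE i n x).

Local Notation cv := (cvec N pr dth).
Local Notation bv := (bvec N th pr dth).
Local Notation av := (avec N th pr dth).

Definition gi (delta : T -> R) (est : bool -> T -> R) (i : bool) (x : T) : R :=
  Pr i * (lam i * \sum_(n < N i) cv i n * (wrong_dec delta i x * pD i n x)
        + muc i * \sum_(n < N i) cv i n *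
             (right_dec delta i x * (est i x - th i n) ^+ 2 * pE i n x)).

Definition g delta est x := \sum_(i : bool) gi delta est i x.

Lemma sumA i w (p : 'I_(N i) -> R) :
  \sum_(n < N i) cv i n * (w * p n) = w * dotv N i (cv i) p.
Proof. by rewrite /dotv mulr_sumr; apply: eq_bigr => n _; ring. Qed.

Lemma sumB i r e (s : 'I_(N i) -> R) :
  \sum_(n < N i) cv i n * (r * (e - th i n) ^+ 2 * s n) = r * Qf R N th pr dth i s e.
Proof. by rewrite /Qf mulr_sumr; apply: eq_bigr => n _; ring. Qed.

Lemma g_split delta est x : g delta est x =
  delta x * (lam false * Pr false * dotv N false (cv false) (fun n => pD false n x)
            + muc true * Pr true * Qf R N th pr dth true (fun n => pE true n x) (est true x))
  + (1 - delta x) * (lam true * Pr true * dotv N true (cv true) (fun n => pD true n x)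
            + muc false * Pr false * Qf R N th pr dth false (fun n => pE false n x) (est false x)).
Proof.
rewrite /g big_bool /gi !sumA !sumB /wrong_dec /right_dec /=; ring.
Qed.


Lemma wrong_ge0 (delta : T -> R) i x : 0 <= delta x <= 1 -> 0 <= wrong_dec delta i x.
Proof. by case: i => /=; case/andP => h1 h2 //; rewrite subr_ge0. Qed.
Lemma right_ge0 (delta : T -> R) i x : 0 <= delta x <= 1 -> 0 <= right_dec delta i x.
Proof. by case: i => /=; case/andP => h1 h2 //; rewrite subr_ge0. Qed.
Lemma mwrong (delta : T -> R) i : measurable_fun setT delta -> measurable_fun setT (wrong_dec delta i).
Proof. by case: i => md //=; apply: measurable_funB. Qed.
Lemma mright (delta : T -> R) i : measurable_fun setT delta -> measurable_fun setT (right_dec delta i).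
Proof. by case: i => md //=; apply: measurable_funB. Qed.

Lemma JNP_g delta est : admissible_policy delta est ->
  JNP mu N th pr dth Pr lam muc delta est pD pE = (\int[mu]_x (g delta est x)%:E)%E.
Proof.
move=> [md [d01 mest]].
have nn x i : 0 <= wrong_dec delta i x by apply: wrong_ge0.
have nn' x i : 0 <= right_dec delta i x by apply: right_ge0.
have mw i := @mwrong delta i md.
have mr i := @mright delta i md.
Ltac nnt := repeat (first [ assumption | (match goal with H : _ |- _ => apply: H end) | apply: sqr_ge0 | apply: mulr_ge0 | apply: addr_ge0
   | apply: sumr_ge0 => ? _ | move=> ? | apply: ltW ]).
Ltac mmt := repeat (first [ assumption | (match goal with H : _ |- _ => apply: H end) | apply: measurable_funD | apply: measurable_funM
   | apply: measurable_funB | apply: measurable_sum => ? | apply: measurable_funX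
   | apply: measurable_cst | move=> ? ]).
rewrite /g intS; last 2 first.
- move=> i x; rewrite /gi; nnt.
- move=> i; rewrite /gi; mmt.
apply: eq_bigr => i _.
rewrite /gi intZ; last 3 first.
- exact: hPr.
- nnt.
- mmt.
congr (_ * _)%E.
rewrite intD; last 4 first.
- nnt.
- nnt.
- mmt.
- mmt.
rewrite intZ; last 3 first; [exact: hlam| nnt | mmt|].
rewrite intZ; last 3 first; [exact: hmuc| nnt | mmt|].
congr (_ * _ + _ * _)%E.
- rewrite intS; last 2 first; [nnt|mmt|].
  apply: eq_bigr => n _; rewrite intZ //; [nnt|nnt|mmt].
- rewrite intS; last 2 first; [nnt|mmt|].
  apply: eq_bigr => n _; rewrite intZ //; [nnt|nnt|mmt].
Qed.


Local Notation Dt := (Dtilde N th pr dth Pr lam muc pD pE).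

Lemma g_Dt (delta : T -> R) est x :
  delta x * (Dt true x + muc true * Pr true *
     (Qf R N th pr dth true (fun n => pE true n x) (est true x)
      - (dotv N true (av true) (fun n => pE true n x)
         - dotv N true (bv true) (fun n => pE true n x) ^+ 2
           / dotv N true (cv true) (fun n => pE true n x))))
  + (1 - delta x) * (Dt false x + muc false * Pr false *
     (Qf R N th pr dth false (fun n => pE false n x) (est false x)
      - (dotv N false (av false) (fun n => pE false n x)
         - dotv N false (bv false) (fun n => pE false n x) ^+ 2
           / dotv N false (cv false) (fun n => pE false n x))))
  = g delta est x.
Proof. by rewrite g_split /Dtilde /=; ring. Qed.

Lemma g_lb (delta : T -> R) est x : 0 <= delta x <= 1 ->
  rhoNP N th pr dth Pr lam muc pD pE x <= g delta est x.
Proof.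
move=> /andP[d0 d1].
rewrite -g_Dt /rhoNP.
set m := Num.min _ _.
have hm0 : m <= Dt false x by rewrite /m ge_min lexx.
have hm1 : m <= Dt true x by rewrite /m ge_min lexx orbT.
have q1 := @Qf_min R N th pr dth hdth hpr true (fun n => pE true n x) (est true x)
   (fun n => E0 _ _ _).
have q0 := @Qf_min R N th pr dth hdth hpr false (fun n => pE false n x) (est false x)
   (fun n => E0 _ _ _).
move: q1 q0; set u1 := (_ - _ / _); set u0 := (_ - _ / _).
move: (Qf _ _ _ _ _ _ _ _) => Q1; move: (Qf _ _ _ _ _ _ _ _) => Q0 => q1 q0.
have k1 : 0 <= muc true * Pr true * (Q1 - u1).
  by rewrite mulr_ge0 ?subr_ge0 // mulr_ge0.
have k0 : 0 <= muc false * Pr false * (Q0 - u0).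
  by rewrite mulr_ge0 ?subr_ge0 // mulr_ge0.
move: (muc true * Pr true * (Q1 - u1)) k1 => y1 k1.
move: (muc false * Pr false * (Q0 - u0)) k0 => y0 k0.
have e1 : 0 <= delta x * (Dt true x + y1 - m).
  by apply: mulr_ge0; lra.
have e0 : 0 <= (1 - delta x) * (Dt false x + y0 - m).
  by apply: mulr_ge0; lra.
lra.
Qed.


Lemma mV (f : T -> R) : measurable_fun setT f -> measurable_fun setT (fun x => (f x)^-1).
Proof. by move=> mf; exact: (measurableT_comp minv mf). Qed.

Ltac mmt2 := repeat (first [ assumption
   | apply: mV | apply: measurable_funN
   | apply: measurable_funD | apply: measurable_funM
   | apply: measurable_funB | apply: measurable_sum => ? | apply: measurable_funX
   | apply: measurable_cst | (match goal with H : _ |- _ => apply: H end) | move=> ? ]).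

Lemma mDt i : measurable_fun setT (Dt i).
Proof. rewrite /Dtilde /dotv; mmt2. Qed.

Definition estO i x := dotv N i (bv i) (fun n => pE i n x) / dotv N i (cv i) (fun n => pE i n x).
Definition deltaO x : R := if Dt false x < Dt true x then 0 else 1.

Lemma admO : admissible_policy deltaO estO.
Proof.
split; [|split].
- apply: measurable_fun_ifT; [|exact: measurable_cst|exact: measurable_cst].
  apply: measurable_fun_ltr; exact: mDt.
- by move=> x; rewrite /deltaO; case: ifP => _; rewrite lexx ler01.
- move=> i; rewrite /estO /dotv; mmt2.
Qed.

Lemma g_opt x : g deltaO estO x = rhoNP N th pr dth Pr lam muc pD pE x.
Proof.
rewrite -g_Dt /estO !Qf_opt !subrr !mulr0 !addr0 /rhoNP minElt /deltaO.
by case: ifP => _; ring.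
Qed.

Lemma g_ge0 (delta : T -> R) est x : 0 <= delta x <= 1 -> 0 <= g delta est x.
Proof.
move=> /andP[d0 d1]; rewrite /g /gi.
have nn i : 0 <= wrong_dec delta i x by apply: wrong_ge0; rewrite d0 d1.
have nn' i : 0 <= right_dec delta i x by apply: right_ge0; rewrite d0 d1.
nnt.
Qed.

Lemma mg (delta : T -> R) est : admissible_policy delta est ->
  measurable_fun setT (g delta est).
Proof.
move=> [md [d01 mest]].
have mw i := @mwrong delta i md.
have mr i := @mright delta i md.
rewrite /g /gi; mmt.
Qed.

Lemma minJNP_eq : minJNP mu N th pr dth Pr lam muc pD pE = DrhoNP mu N th pr dth Pr lam muc pD pE.
Proof.
have hO : DrhoNP mu N th pr dth Pr lam muc pD pE = JNP mu N th pr dth Pr lam muc deltaO estO pD pE.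
  rewrite JNP_g; last exact: admO.
  by rewrite /DrhoNP; apply: eq_integral => x _; rewrite g_opt.
have [_ [dO01 _]] := admO.
apply/eqP; rewrite eq_le; apply/andP; split.
- rewrite hO; apply: ereal_inf_lbound; exists deltaO, estO; split => //; exact: admO.
- apply/ereal_infP => y [delta [est [adm ->]]].
  have [_ [d01 _]] := adm.
  rewrite JNP_g // /DrhoNP; apply: ge0_le_integral => //.
  + by move=> x _; rewrite lee_fin -g_opt; apply: g_ge0.
  + apply/measurable_EFinP.
    rewrite (_ : rhoNP _ _ _ _ _ _ _ _ _ = g deltaO estO); last first.
      by apply/funext => x; rewrite g_opt.
    exact/mg/admO.
  + exact/measurable_EFinP/mg.
  + by move=> x _; rewrite lee_fin; apply: g_lb.
Qed.

End Meas.

Theorem corollary2 (d : measure_display) (T : measurableType d) (R : realType)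
  (mu : {measure set T -> \bar R})
  (N : bool -> nat) (th pr : forall i : bool, 'I_(N i) -> R) (dth : bool -> R)
  (Pr lam muc : bool -> R)
  (U : forall i : bool, 'I_(N i) -> set (T -> R))
  (hPr : forall i, 0 <= Pr i) (hPr1 : Pr false + Pr true = 1)
  (hlam : forall i, 0 <= lam i) (hmuc : forall i, 0 <= muc i)
  (hdth : forall i, 0 < dth i) (hpr : forall i n, 0 <= pr i n)
  (hUd : forall i n f, U i n f -> is_density mu f)
  (hUc : forall i n, convex_dens_set (U i n))
  (qD qE : forall i : bool, 'I_(N i) -> T -> R) :
  is_argmax N U (minJNP mu N th pr dth Pr lam muc) qD qE <->
  is_argmax N U (DrhoNP mu N th pr dth Pr lam muc) qD qE.
Proof.
have key : forall pD pE, in_PP N U pD pE ->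
    minJNP mu N th pr dth Pr lam muc pD pE = DrhoNP mu N th pr dth Pr lam muc pD pE.
  move=> pD pE hP.
  have hD i n := hUd _ _ _ (proj1 (hP i n)).
  have hE i n := hUd _ _ _ (proj2 (hP i n)).
  apply: minJNP_eq => //.
  - by move=> i n; case: (hD i n).
  - by move=> i n; case: (hE i n).
  - by move=> i n x; case: (hD i n) => _ [].
  - by move=> i n x; case: (hE i n) => _ [].
rewrite /is_argmax; split => -[hq hmax]; split => // pD pE hP.
- by rewrite -!key //; exact: hmax.
- by rewrite !key //; exact: hmax.
Qed.
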